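(* Let $G$ be a finite group acting linearly, isometrically and effectively on $M=\mathbb{R}^n$. Let $X$ be a random variable in $\mathbb{R}^n$ whose law is absolutely continuous with respect to Lebesgue measure, with $\mathbb{E}(\|X\|^2)<+\infty$, and assume that $t_0=\mathbb{E}(X)$ is a regular point. If $$\mathbb{P}\big(X\notin \mathrm{Cone}(t_0)\big)>0,$$ then $[t_0]$ is not a Fréchet mean of $[X]$.
   Context: $\mathbb{R}^n$ carries the Euclidean inner product $\langle\cdot,\cdot\rangle$ and norm $\|\cdot\|$. A group $G$ acts on $M$ via $(g,m)\mapsto g\cdot m$ with $(gg')\cdot m=g\cdot(g'\cdot m)$ and $e_G\cdot m=m$; the action is linear and isometric if each $x\mapsto g\cdot x$ is linear with $\|g\cdot x\|=\|x\|$, and effective if $x\mapsto g\cdot x$ is the identity map only for $g=e_G$. The orbit of $m$ is $[m]=\{g\cdot m: g\in G\}$ and the quotient distance is $d_Q([a],[b])=\inf_{g\in G}\|g\cdot a-b\|$. A point $m$ is regular if $\{g\in G: g\cdot m=m\}=\{e_G\}$. For a regular $m$, $\mathrm{Cone}(m)=\{x\in\mathbb{R}^n: \|x-m\|\le\|x-g\cdot m\| \text{ for all } g\in G\}$. The variance of $[X]$ is $F(m)=\mathbb{E}\big(\min_{g\in G}\|g\cdot X-m\|^2\big)=\mathbb{E}(d_Q([m],[X])^2)$ for $m\in M$; an orbit $[m_\star]$ is a Fréchet mean of $[X]$ if $m_\star$ is a global minimiser of $F$. *)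

(* Defs.v *)
(* R^n is modelled as row vectors 'rV[R]_n over R : realType. *)
From HB Require Import structures.
From mathcomp Require Import all_boot all_order all_algebra all_fingroup.
From mathcomp Require Import all_classical all_reals all_analysis.
Set Implicit Arguments. Unset Strict Implicit. Unset Printing Implicit Defensive.
Import Order.TTheory GRing.Theory Num.Theory.
Local Open Scope classical_set_scope.
Local Open Scope ring_scope.

Section Defs.
Variables (R : realType) (n : nat).

Definition edot (u v : 'rV[R]_n) : R := \sum_(i < n) u 0 i * v 0 i.
Definition enorm (u : 'rV[R]_n) : R := Num.sqrt (edot u u).

Definition box (a b : 'rV[R]_n) : set 'rV[R]_n :=
  [set x | forall i : 'I_n, a 0 i <= x 0 i <= b 0 i].
Definition box_vol (a b : 'rV[R]_n) : R := \prod_(i < n) (b 0 i - a 0 i).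

Definition lebesgue_null (A : set 'rV[R]_n) : Prop :=
  forall eps : R, 0 < eps ->
  exists a b : nat -> 'rV[R]_n,
    [/\ (forall k (i : 'I_n), a k 0 i <= b k 0 i),
        A `<=` \bigcup_k box (a k) (b k)
      & forall N, \sum_(k < N) box_vol (a k) (b k) <= eps].

Variable gT : finGroupType.
Variable act : gT -> 'rV[R]_n -> 'rV[R]_n.

Definition is_group_action : Prop :=
  (forall x, act 1%g x = x) /\ (forall g h x, act (g * h)%g x = act g (act h x)).
Definition act_linear : Prop :=
  forall g (a : R) (x y : 'rV[R]_n), act g (a *: x + y) = a *: act g x + act g y.
Definition act_isometric : Prop := forall g x, enorm (act g x) = enorm x.
Definition act_effective : Prop := forall g, (forall x, act g x = x) -> g = 1%g.

Definition regular_point (m : 'rV[R]_n) : Prop :=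
  forall g, act g m = m -> g = 1%g.

Definition Cone (m : 'rV[R]_n) : set 'rV[R]_n :=
  [set x | forall g : gT, enorm (x - m) <= enorm (x - act g m)].

(* squared quotient distance  d_Q([a],[b])^2 = min_g ||g.a - b||^2 *)
Definition dQ2 (a b : 'rV[R]_n) : R :=
  \big[Num.min/enorm (act 1%g a - b) ^+ 2]_(g : gT) (enorm (act g a - b) ^+ 2).

Context d (T : measurableType d) (P : probability T R).
Variable X : T -> 'rV[R]_n.

Definition random_vector : Prop :=
  forall i : 'I_n, measurable_fun [set: T] (fun w => X w 0 i).

Definition law_abs_cont : Prop :=
  forall A, lebesgue_null A -> P.-negligible (X @^-1` A).

Definition finite_second_moment : Prop :=
  P.-integrable [set: T] (fun w => (enorm (X w) ^+ 2)%:E).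

Definition expect_vec : 'rV[R]_n :=
  \row_(i < n) fine (\int[P]_w (X w 0 i)%:E).

Definition frechet_F (m : 'rV[R]_n) : \bar R :=
  \int[P]_w (dQ2 (X w) m)%:E.

Definition is_frechet_mean (m : 'rV[R]_n) : Prop :=
  forall m' : 'rV[R]_n, (frechet_F m <= frechet_F m')%E.

End Defs.

(* Main.v *)
Require Import Defs.
From HB Require Import structures.
From mathcomp Require Import all_boot all_order all_algebra all_fingroup.
From mathcomp Require Import all_classical all_reals all_analysis.
From mathcomp Require Import ring lra.
From mathcomp Require Import measurable_realfun.
Import Order.TTheory GRing.Theory Num.Theory.
Set Implicit Arguments. Unset Strict Implicit. Unset Printing Implicit Defensive.
Local Open Scope classical_set_scope.
Local Open Scope ring_scope.

Section Alg.
Variables (R : realType) (n : nat).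

Lemma edot_ge0 (u : 'rV[R]_n) : 0 <= edot u u.
Proof. by rewrite /edot; apply: sumr_ge0 => i _; rewrite -expr2 sqr_ge0. Qed.

Lemma enorm_sq (u : 'rV[R]_n) : enorm u ^+ 2 = edot u u.
Proof. by rewrite /enorm sqr_sqrtr // edot_ge0. Qed.

Lemma enorm_ge0 (u : 'rV[R]_n) : 0 <= enorm u.
Proof. exact: sqrtr_ge0. Qed.

Lemma edotC (u v : 'rV[R]_n) : edot u v = edot v u.
Proof. by rewrite /edot; apply: eq_bigr => i _; rewrite mulrC. Qed.

Lemma edot_subZ (u t : 'rV[R]_n) (s : R) :
  edot (u - s *: t) (u - s *: t) = edot u u - 2 * s * edot u t + s ^+ 2 * edot t t.
Proof.
rewrite /edot !mulr_sumr -sumrB -big_split /=; apply: eq_bigr => i _.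
rewrite !mxE; ring.
Qed.

Lemma edot_sub (u t : 'rV[R]_n) :
  edot (u - t) (u - t) = edot u u - 2 * edot u t + edot t t.
Proof. by have := edot_subZ u t 1; rewrite scale1r mulr1 expr1n mul1r. Qed.

Lemma edot_subr (x t : 'rV[R]_n) :
  edot x t - edot t t = \sum_(i < n) t 0 i * (x 0 i - t 0 i).
Proof. by rewrite /edot -sumrB; apply: eq_bigr => i _; ring. Qed.

Lemma le_enorm (u v : 'rV[R]_n) : (enorm u <= enorm v) = (edot u u <= edot v v).
Proof. by rewrite /enorm ler_sqrt // edot_ge0. Qed.

Lemma lt_enorm (u v : 'rV[R]_n) : (enorm u < enorm v) = (edot u u < edot v v).
Proof. by rewrite !ltNge le_enorm. Qed.

End Alg.

Section Act.
Variables (R : realType) (n : nat) (gT : finGroupType).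
Variable act : gT -> 'rV[R]_n -> 'rV[R]_n.
Hypotheses (hga : is_group_action act) (hlin : act_linear act)
  (hiso : act_isometric act).

Lemma act_add g x y : act g (x + y) = act g x + act g y.
Proof. by have := hlin g 1 x y; rewrite !scale1r. Qed.

Lemma act0 g : act g 0 = 0.
Proof.
have h := act_add g 0 0; rewrite addr0 in h.
by have := congr1 (fun v => v - act g 0) h; rewrite subrr addrK.
Qed.

Lemma act_sub g x y : act g (x - y) = act g x - act g y.
Proof. by have := hlin g (-1) y x; rewrite !scaleN1r addrC => ->; rewrite addrC. Qed.

Lemma act_coord g x i :
  act g x 0 i = \sum_(j < n) x 0 j * act g (delta_mx 0 j) 0 i.
Proof.
rewrite {1}(row_sum_delta x).
rewrite (big_morph (act g) (act_add g) (act0 g)) summxE.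
apply: eq_bigr => j _.
by have := hlin g (x 0 j) (delta_mx 0 j) 0; rewrite !addr0 act0 addr0 => ->; rewrite mxE.
Qed.

Lemma act_edot g x : edot (act g x) (act g x) = edot x x.
Proof. by rewrite -!enorm_sq hiso. Qed.

Lemma act_inv_norm g x t : enorm (x - act g^-1 t) = enorm (act g x - t).
Proof.
rewrite -(hiso g) act_sub; case: hga => h1 hM.
by rewrite -hM mulgV h1.
Qed.

Lemma dQ2_attained x t : exists g, dQ2 act x t = enorm (act g x - t) ^+ 2.
Proof.
rewrite /dQ2; apply: (big_ind (fun y => exists g, y = enorm (act g x - t) ^+ 2)).
- by exists 1%g.
- move=> y z [g ->] [h ->]; case: (leP (enorm (act g x - t) ^+ 2) (enorm (act h x - t) ^+ 2)) => H.
  + by exists g.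
  + by exists h.
- by move=> g _; exists g.
Qed.

Lemma dQ2_le x t g : dQ2 act x t <= enorm (act g x - t) ^+ 2.
Proof. exact: bigmin_le. Qed.

Lemma dQ2_ge0 x t : 0 <= dQ2 act x t.
Proof. by have [g ->] := dQ2_attained x t; rewrite sqr_ge0. Qed.

Lemma dQ2_leQ x t : dQ2 act x t <= edot (x - t) (x - t).
Proof.
by have := dQ2_le x t 1%g; case: hga => h1 _; rewrite h1 enorm_sq.
Qed.

Lemma key x t e :
  dQ2 act x ((1 + e) *: t) <=
  dQ2 act x t - e * (edot (x - t) (x - t) - dQ2 act x t)
  - 2 * e * (edot x t - edot t t) + e ^+ 2 * edot t t.
Proof.
have [g Hg] := dQ2_attained x t.
apply: le_trans (dQ2_le _ _ g) _.
rewrite Hg !enorm_sq edot_subZ !edot_sub act_edot.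
by rewrite le_eqVlt; apply/orP; left; apply/eqP; ring.
Qed.

Lemma notCone_iff x t :
  ~ Cone act t x <-> dQ2 act x t < edot (x - t) (x - t).
Proof.
split.
- move=> /existsNP [g /negP]; rewrite -ltNge => H.
  apply: (le_lt_trans (dQ2_le x t g^-1)).
  move: H; rewrite -act_inv_norm invgK lt_enorm enorm_sq //.
- move=> H HC; have [g Hg] := dQ2_attained x t.
  have := HC g^-1%g; rewrite act_inv_norm le_enorm -(@enorm_sq R n (act g x - t)) -Hg leNgt.
  by rewrite H.
Qed.

End Act.

Section Meas.
Variables (R : realType) (n : nat) (gT : finGroupType).
Variable act : gT -> 'rV[R]_n -> 'rV[R]_n.
Hypotheses (hga : is_group_action act) (hlin : act_linear act)
  (hiso : act_isometric act).
Variables (d : measure_display) (T : measurableType d) (P : probability T R).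
Variable X : T -> 'rV[R]_n.
Hypothesis (hX : random_vector X) (h2 : finite_second_moment P X).

Definition Int (f : T -> R) := P.-integrable setT (fun w => (f w)%:E).
Definition Ex (f : T -> R) := fine (\int[P]_w (f w)%:E).

Lemma IntE f : Int f -> (\int[P]_w (f w)%:E = (Ex f)%:E)%E.
Proof. by move=> hf; rewrite /Ex fineK //; exact: integrable_fin_num hf. Qed.

Lemma IntD f g : Int f -> Int g -> Int (fun w => f w + g w).
Proof.
move=> hf hg; have := integrableD measurableT hf hg.
by apply: eq_integrable => // w _; rewrite EFinD.
Qed.

Lemma IntZ c f : Int f -> Int (fun w => c * f w).
Proof.
move=> hf; have := integrableZl measurableT c hf.
by apply: eq_integrable => // w _; rewrite EFinM.
Qed.

Lemma IntC c : Int (fun _ => c).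
Proof. exact: finite_measure_integrable_cst. Qed.

Lemma IntB f g : Int f -> Int g -> Int (fun w => f w - g w).
Proof.
move=> hf hg; have := IntD hf (IntZ (-1) hg).
by apply: eq_integrable => // w _; rewrite mulN1r.
Qed.

Lemma ExD f g : Int f -> Int g -> Ex (fun w => f w + g w) = Ex f + Ex g.
Proof.
move=> hf hg; rewrite /Ex.
under eq_integral do rewrite EFinD.
by rewrite integralD // (IntE hf) (IntE hg).
Qed.

Lemma ExZ c f : Int f -> Ex (fun w => c * f w) = c * Ex f.
Proof.
move=> hf; rewrite /Ex.
under eq_integral do rewrite EFinM.
by rewrite integralZl // (IntE hf).
Qed.

Lemma ExC c : Ex (fun _ => c) = c.
Proof.
rewrite /Ex; have := integral_cst P measurableT c%:E.
rewrite /cst => ->.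
rewrite [X in fine (_ * X)](_ : _ = 1%E) ?mule1 //; exact: probability_setT.
Qed.

Lemma ExB f g : Int f -> Int g -> Ex (fun w => f w - g w) = Ex f - Ex g.
Proof.
move=> hf hg; have := ExD hf (IntZ (-1) hg); rewrite ExZ // mulN1r.
by under eq_fun do rewrite mulN1r.
Qed.

Lemma Int_sum (f : 'I_n -> T -> R) :
  (forall i, Int (f i)) -> Int (fun w => \sum_(i < n) f i w).
Proof.
move=> hf; have := integrable_sum measurableT (index_enum 'I_n) (P := xpredT) (fun i _ => hf i).
by apply: eq_integrable => // w _; rewrite sumEFin.
Qed.

Lemma Ex_sum (f : 'I_n -> T -> R) :
  (forall i, Int (f i)) -> Ex (fun w => \sum_(i < n) f i w) = \sum_(i < n) Ex (f i).
Proof.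
move=> hf; rewrite /Ex.
under eq_integral do rewrite -sumEFin.
rewrite integral_sum //.
under eq_bigr do rewrite (IntE (hf _)).
by rewrite sumEFin.
Qed.

Lemma Ex_le f g : Int f -> Int g -> (forall w, f w <= g w) -> Ex f <= Ex g.
Proof.
move=> hf hg hfg; rewrite -lee_fin -(IntE hf) -(IntE hg).
by apply: le_integral => // w _; rewrite lee_fin.
Qed.

Lemma m_actc g i : measurable_fun setT (fun w => act g (X w) 0 i).
Proof.
rewrite (_ : (fun w => _) = fun w => \sum_(j < n) X w 0 j * act g (delta_mx 0 j) 0 i);
  last by apply/funext => w; rewrite (act_coord hlin).
apply: measurable_sum => j.
exact: measurable_funM (hX j) (measurable_cst _).
Qed.

Lemma m_edot (V : T -> 'rV[R]_n) m :
  (forall i, measurable_fun setT (fun w => V w 0 i)) ->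
  measurable_fun setT (fun w => edot (V w - m) (V w - m)).
Proof.
move=> hV; rewrite /edot; apply: measurable_sum => i.
rewrite (_ : (fun w => _) = fun w => (V w 0 i - m 0 i) * (V w 0 i - m 0 i));
  last by apply/funext => w; rewrite !mxE.
by apply: measurable_funM; apply: measurable_funB => //; exact: measurable_cst.
Qed.

Lemma mbigmin (s : seq gT) (F : gT -> T -> R) (h0 : T -> R) :
  measurable_fun setT h0 -> (forall g, measurable_fun setT (F g)) ->
  measurable_fun setT (fun w => \big[Num.min/h0 w]_(g <- s) F g w).
Proof.
move=> m0 mF; elim: s => [|g s IH].
  by under eq_fun do rewrite big_nil.
under eq_fun do rewrite big_cons.
exact: measurable_minr.
Qed.

Lemma mdQ2 m : measurable_fun setT (fun w => dQ2 act (X w) m).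
Proof.
have hF g : measurable_fun setT (fun w => enorm (act g (X w) - m) ^+ 2).
  under eq_fun do rewrite enorm_sq.
  by apply: m_edot => i; exact: m_actc.
rewrite /dQ2; apply: mbigmin => //; exact: hF 1%g.
Qed.

Lemma IntS : Int (fun w => edot (X w) (X w)).
Proof. by move: h2; apply: eq_integrable => // w _; rewrite enorm_sq. Qed.

Lemma norm_le_sq (x : R) : `|x| <= 1 + x ^+ 2.
Proof.
have h0 := normr_ge0 x.
have hxx : `|x| * `|x| = x * x by rewrite -normrM ger0_norm // -expr2 sqr_ge0.
rewrite expr2; nra.
Qed.

Lemma coord_le (u : 'rV[R]_n) i : u 0 i ^+ 2 <= edot u u.
Proof.
rewrite /edot (bigD1 i) //= expr2 lerDl.
by apply: sumr_ge0 => j _; rewrite -expr2 sqr_ge0.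
Qed.

Lemma IntXi i : Int (fun w => X w 0 i).
Proof.
apply: (le_integrable measurableT _ _ (IntD (IntC 1) IntS)).
  exact/measurable_EFinP.
move=> w _; rewrite !abse_EFin lee_fin.
rewrite (ger0_norm (addr_ge0 ler01 (edot_ge0 _))).
apply: le_trans (norm_le_sq _) _; rewrite lerD2l; exact: coord_le.
Qed.

Lemma IntXm m : Int (fun w => edot (X w) m).
Proof.
rewrite /edot; apply: Int_sum => i.
rewrite (_ : (fun w => _) = fun w => m 0 i * X w 0 i);
  last by apply/funext => w; rewrite mulrC.
exact: IntZ (IntXi i).
Qed.

Lemma IntQ m : Int (fun w => edot (X w - m) (X w - m)).
Proof.
rewrite (_ : (fun w => _) = fun w => edot (X w) (X w) - 2 * edot (X w) m + edot m m);
  last by apply/funext => w; rewrite edot_sub.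
exact: IntD (IntB IntS (IntZ 2 (IntXm m))) (IntC _).
Qed.

Lemma IntdQ2 m : Int (fun w => dQ2 act (X w) m).
Proof.
apply: (le_integrable measurableT _ _ (IntQ m)).
  exact/measurable_EFinP/mdQ2.
move=> w _; rewrite !abse_EFin lee_fin.
rewrite (ger0_norm (edot_ge0 _)) ger0_norm ?dQ2_ge0 //.
exact: (dQ2_leQ hga).
Qed.

End Meas.

Theorem mainTheorem1 (R : realType) (n : nat) (gT : finGroupType)
  (act : gT -> 'rV[R]_n -> 'rV[R]_n)
  (d : measure_display) (T : measurableType d) (P : probability T R)
  (X : T -> 'rV[R]_n) :
  is_group_action act -> act_linear act -> act_isometric act -> act_effective act ->
  random_vector X -> law_abs_cont P X -> finite_second_moment P X ->
  regular_point act (expect_vec P X) ->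
  (0 < P [set w | ~ Cone act (expect_vec P X) (X w)])%E ->
  ~ is_frechet_mean act P X (expect_vec P X).
Proof.
move=> hga hlin hiso _ hX _ h2 _ hA hmean.
set t := expect_vec P X in hA hmean.
pose D w := dQ2 act (X w) t.
pose Q w := edot (X w - t) (X w - t).
pose k w := Q w - D w.
pose a := edot t t.
pose L w := edot (X w) t - a.
have hk0 w : 0 <= k w by rewrite subr_ge0; exact: (dQ2_leQ hga).
have IntD' : Int P D := IntdQ2 hga hlin hX h2 t.
have Intk : Int P k := IntB (IntQ hX h2 t) IntD'.
have mk : measurable_fun setT k.
  apply: measurable_funB; first exact: m_edot.
  exact: (mdQ2 hlin hX).
pose K := Ex P k.
have hK : 0 < K.
  rewrite ltNge; apply/negP => hK0.
  have K0 : K = 0.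
    apply/eqP; rewrite eq_le hK0 /=.
    by rewrite -(ExC P 0); apply: Ex_le => //; exact: IntC.
  have hint0 : (\int[P]_w `|(k w)%:E| = 0)%E.
    under eq_integral do rewrite gee0_abs ?lee_fin //.
    by rewrite (IntE Intk) -/K K0.
  have := (ae_eq_integral_abs P measurableT ((measurable_EFinP _ _).2 mk)).1 hint0.
  case=> N [mN PN0 sub].
  have eA : [set w | ~ Cone act t (X w)] = setT `&` k @^-1` `]0%R, +oo[.
    apply/seteqP; split => w /=.
      move=> /(notCone_iff hga hlin hiso) h; split => //.
      by rewrite in_itv /= andbT subr_gt0.
    case=> _; rewrite in_itv /= andbT subr_gt0 => h.
    exact/(notCone_iff hga hlin hiso).
  have mA : measurable [set w | ~ Cone act t (X w)].
    by rewrite eA; apply: mk => //; exact: measurable_itv.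
  have : (P [set w | ~ Cone act t (X w)] <= P N)%E.
    apply: le_measure; rewrite ?inE //.
    move=> w hw; apply: sub => /= H.
    have := H Logic.I; move/eqP; rewrite eqe.
    move: hw => /(notCone_iff hga hlin hiso); rewrite -subr_gt0 -/(Q w) -/(D w) -/(k w).
    by move=> /gt_eqF ->.
  by rewrite PN0 => /(lt_le_trans hA); rewrite ltxx.
have ha : 0 <= a := edot_ge0 t.
pose e := K / (a + 1).
have he : 0 < e by rewrite divr_gt0 // ltr_wpDl.
have hea : e * a < K.
  rewrite /e mulrAC ltr_pdivrMr ?ltr_wpDl // mulrDr mulr1; lra.
have IntL : Int P L := IntB (IntXm hX h2 t) (IntC P a).
have ExL : Ex P L = 0.
  have -> : L = fun w => \sum_(i < n) t 0 i * (X w 0 i - t 0 i).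
    by apply/funext => w; rewrite /L /a edot_subr.
  rewrite Ex_sum; last by move=> i; apply: IntZ; apply: IntB; [exact: IntXi|exact: IntC].
  apply: big1 => i _; rewrite ExZ; last by apply: IntB; [exact: IntXi|exact: IntC].
  rewrite ExB; [|exact: IntXi|exact: IntC].
  by rewrite ExC /t /expect_vec mxE subrr mulr0.
pose r w := D w - e * k w - 2 * e * L w + e ^+ 2 * a.
have Intr : Int P r.
  exact: IntD (IntB (IntB IntD' (IntZ e Intk)) (IntZ (2 * e) IntL)) (IntC P _).
have Exr : Ex P r = Ex P D - e * K + e ^+ 2 * a.
  rewrite /r ExD; [|exact: (IntB (IntB IntD' (IntZ e Intk)) (IntZ (2 * e) IntL))|exact: IntC].
  rewrite ExB; [|exact: (IntB IntD' (IntZ e Intk))|exact: (IntZ (2 * e) IntL)].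
  rewrite ExB; [|exact: IntD'|exact: (IntZ e Intk)].
  by rewrite (ExZ _ Intk) (ExZ _ IntL) ExC ExL mulr0 subr0.
pose D' w := dQ2 act (X w) ((1 + e) *: t).
have IntD'' : Int P D' := IntdQ2 hga hlin hX h2 _.
have hD'r : Ex P D' <= Ex P r.
  apply: Ex_le => // w; rewrite /D' /r /D /k /Q /L /a.
  exact: (key hiso).
have := hmean ((1 + e) *: t).
rewrite /frechet_F -/(D' _).
have -> : (\int[P]_w (dQ2 act (X w) t)%:E = (Ex P D)%:E)%E by exact: IntE.
have -> : (\int[P]_w (dQ2 act (X w) ((1 + e) *: t))%:E = (Ex P D')%:E)%E by exact: IntE.
rewrite lee_fin => hDD'.
have h3 : e * (e * a) < e * K by rewrite ltr_pM2l.
move: hD'r; rewrite Exr; rewrite expr2 -mulrA; lra.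
Qed.
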